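(* Let $\tau_1,\tau_c,\tau_s>0$ with $\tau_1+\tau_c+\tau_s=1$ and $1\gg\tau_c/\tau_1>\tau_s/\tau_1>0$. Let $$\eta_uA^{(u)}=\begin{bmatrix}a&2\tau_1\tau_s&2\tau_1\tau_c&2\tau_c\tau_s&0&0\\2\tau_1\tau_s&a&2\tau_c\tau_s&2\tau_1\tau_c&0&0\\2\tau_1\tau_c&2\tau_c\tau_s&a&2\tau_1\tau_s&0&0\\2\tau_c\tau_s&2\tau_1\tau_c&2\tau_1\tau_s&a&0&0\\0&0&0&0&2\tau_1^2&2\tau_1^2\\0&0&0&0&2\tau_1^2&2\tau_1^2\end{bmatrix},\quad a=\tau_1^2+\tau_s^2+\tau_c^2,$$ let $D^{(u)}$ be the diagonal matrix of row sums of $\eta_uA^{(u)}$, and let $\lambda_1^{(u)}\ge\lambda_2^{(u)}\ge\lambda_3^{(u)}$ be the three largest eigenvalues of $D^{(u)-1/2}(\eta_uA^{(u)})D^{(u)-1/2}$ with eigenvectors $v_1^{(u)},v_2^{(u)},v_3^{(u)}$. Set $\hat\lambda_1^{(u)}=1,\ \hat\lambda_2^{(u)}=1,\ \hat\lambda_3^{(u)}=1-4\frac{\tau_s}{\tau_1}$ and $\hat v_1^{(u)}=[0,0,0,0,1,1]$, $\hat v_2^{(u)}=[1,1,1,1,0,0]$, $\hat v_3^{(u)}=[1,-1,1,-1,0,0]$. Then for $i\in\{1,2,3\}$, $|\lambda_i^{(u)}-\hat\lambda_i^{(u)}|\le O((\tau_c/\tau_1)^2)$, and $\|\sin(U^{(u)},\hat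 U^{(u)})\|_F\le O\big(\frac{\tau_c^2}{\tau_1(\tau_c-\tau_s)}\big)$, where $U^{(u)}=[v_1^{(u)},v_2^{(u)},v_3^{(u)}]$ and $\hat U^{(u)}=[\hat v_1^{(u)},\hat v_2^{(u)},\hat v_3^{(u)}]$.
   Context: $\sin(U,\hat U)$ denotes the matrix of sines of the principal angles between the column spaces of $U$ and $\hat U$ (subspace distance between matrices with orthonormalized columns). The $O(\cdot)$ bounds refer to the regime $\tau_c/\tau_1\to0$. *)

(* Defs.v *)
From HB Require Import structures.
From mathcomp Require Import all_boot all_order all_algebra.
Set Implicit Arguments. Unset Strict Implicit. Unset Printing Implicit Defensive.
Import Order.TTheory GRing.Theory Num.Theory.
Local Open Scope ring_scope.

Section Defs.
Variable R : rcfType.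

Definition etaA_entry (t1 tc ts : R) (i j : nat) : R :=
  let a := t1 ^+ 2 + ts ^+ 2 + tc ^+ 2 in
  match i, j with
  | 0, 0 | 1, 1 | 2, 2 | 3, 3 => a
  | 0, 1 | 1, 0 | 2, 3 | 3, 2 => 2 * t1 * ts
  | 0, 2 | 2, 0 | 1, 3 | 3, 1 => 2 * t1 * tc
  | 0, 3 | 3, 0 | 1, 2 | 2, 1 => 2 * tc * ts
  | 4, 4 | 4, 5 | 5, 4 | 5, 5 => 2 * t1 ^+ 2
  | _, _ => 0
  end.

Definition etaA (t1 tc ts : R) : 'M[R]_6 :=
  \matrix_(i < 6, j < 6) etaA_entry t1 tc ts i j.

Definition Dinvsqrt (A : 'M[R]_6) : 'M[R]_6 :=
  diag_mx (\row_(i < 6) (Num.sqrt (\sum_(j < 6) A i j))^-1).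

Definition normA (t1 tc ts : R) : 'M[R]_6 :=
  Dinvsqrt (etaA t1 tc ts) *m etaA t1 tc ts *m Dinvsqrt (etaA t1 tc ts).

Definition hatlam (t1 ts : R) (i : 'I_3) : R :=
  match val i with 0 | 1 => 1 | _ => 1 - 4 * (ts / t1) end.

Definition hatU_entry (i j : nat) : R :=
  match j, i with
  | 0, 4 | 0, 5 => 1
  | 1, 0 | 1, 1 | 1, 2 | 1, 3 => 1
  | 2, 0 | 2, 2 => 1
  | 2, 1 | 2, 3 => -1
  | _, _ => 0
  end.
Definition hatU : 'M[R]_(6, 3) := \matrix_(i < 6, j < 3) hatU_entry i j.

(* normalize each column to unit Euclidean norm; since the columns of hatU are
   mutually orthogonal, this is its (Gram-Schmidt) orthonormalization *)
Definition normcols n k (M : 'M[R]_(n, k)) : 'M[R]_(n, k) :=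
  \matrix_(i < n, j < k) (M i j / Num.sqrt (\sum_(l < n) M l j ^+ 2)).

Definition top3 (V : 'M[R]_6) : 'M[R]_(6, 3) :=
  \matrix_(i < 6, j < 3) V i (widen_ord (isT : (3 <= 6)%N) j).

(* ||sin(U, W)||_F for U, W with orthonormal columns spanning k-dim spaces:
   the cosines of the principal angles are the singular values s_i of U^T W,
   so ||sin Theta||_F^2 = sum_i (1 - s_i^2) = k - ||U^T W||_F^2. *)
Definition sinF n k (U W : 'M[R]_(n, k)) : R :=
  Num.sqrt (k%:R - \sum_(i < k) \sum_(j < k) ((U^T *m W) i j) ^+ 2).

End Defs.

(* Main.v *)
Require Import Defs.
From HB Require Import structures.
From mathcomp Require Import all_boot all_order all_algebra.
From mathcomp Require Import ring lra.
Import Order.TTheory GRing.Theory Num.Theory.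
Local Open Scope ring_scope.

Section S.
Variable R : rcfType.

Definition Pe (r : R) (i j : nat) : R :=
  match j, i with
  | 0, 4 | 0, 5 => r
  | 1, 0 | 1, 1 | 1, 2 | 1, 3 => 1/2
  | 2, 0 | 2, 2 => 1/2 | 2, 1 | 2, 3 => -(1/2)
  | 3, 0 | 3, 1 => 1/2 | 3, 2 | 3, 3 => -(1/2)
  | 4, 0 | 4, 3 => 1/2 | 4, 1 | 4, 2 => -(1/2)
  | 5, 4 => r | 5, 5 => -r
  | _, _ => 0 end.
Definition Pm r : 'M[R]_6 := \matrix_(i<6,j<6) Pe r i j.
Definition mue (t1 tc ts : R) (j : nat) : R := match j with
 | 0 | 1 => 1 | 2 => (t1+tc-ts)^+2 | 3 => (t1+ts-tc)^+2 | 4 => (t1-ts-tc)^+2 | _ => 0 end.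
Definition mu t1 tc ts : 'rV[R]_6 := \row_j mue t1 tc ts j.

Definition de (t1 : R) (i : nat) : R := if (i < 4)%N then 1 else (2 * t1)^-1.

Lemma sq1 (x : R) : x = 1 ^+ 2 -> (Num.sqrt x)^-1 = 1.
Proof. by move=> ->; rewrite sqrtr_sqr normr1 invr1. Qed.
Lemma sq2 (x t : R) : 0 <= t -> x = t ^+ 2 -> (Num.sqrt x)^-1 = t^-1.
Proof. by move=> h ->; rewrite sqrtr_sqr ger0_norm. Qed.

Lemma Dinv_eq t1 tc ts : 0 < t1 -> t1 + tc + ts = 1 ->
  Dinvsqrt (etaA t1 tc ts) = diag_mx (\row_(i < 6) de t1 i).
Proof.
move=> h1 hs; congr diag_mx; apply/matrixP => i j; rewrite !mxE.
have hts : ts = 1 - t1 - tc by rewrite -hs; ring.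
case: j => [[|[|[|[|[|[|j]]]]]] Hj] //;
  rewrite !big_ord_recl big_ord0 !mxE /= /de /bump /=.
all: first [ rewrite sq1; [done| rewrite hts; ring] | rewrite (@sq2 _ (2 * t1)); [done| lra| ring] ].
Qed.
Lemma eigP t1 tc ts r : 0 < t1 -> t1 + tc + ts = 1 ->
  normA t1 tc ts *m Pm r = Pm r *m diag_mx (mu t1 tc ts).
Proof.
move=> h1 hs; rewrite [RHS]mul_mx_diag /normA Dinv_eq // mul_diag_mx mul_mx_diag.
have hts : ts = 1 - t1 - tc by rewrite -hs; ring.
have t1n : t1 != 0 by rewrite gt_eqF.
apply/matrixP => i j; rewrite !mxE.
rewrite !big_ord_recl !big_ord0 !mxE /=.
case: i => [[|[|[|[|[|[|i]]]]]] Hi] //;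
case: j => [[|[|[|[|[|[|j]]]]]] Hj] //;
  rewrite /de /bump /= ?hts; field; exact: t1n.
Qed.
Definition r0 : R := 1 / Num.sqrt 2.
Lemma r0sq : r0 * r0 = 1/2.
Proof.
rewrite /r0 -expr2 expr_div_n sqr_sqrtr ?ler0n //; ring.
Qed.

Lemma PtP : (Pm r0)^T *m Pm r0 = 1%:M.
Proof.
have h := r0sq.
apply/matrixP => i j; rewrite !mxE.
rewrite !big_ord_recl !big_ord0 !mxE /=.
case: i => [[|[|[|[|[|[|i]]]]]] Hi] //;
case: j => [[|[|[|[|[|[|j]]]]]] Hj] //;
  rewrite /bump /=; nra.
Qed.

Lemma sq4 : Num.sqrt (4 : R) = 2.
Proof. by rewrite (_ : 4 = 2 ^+ 2) ?sqrtr_sqr ?ger0_norm //; ring. Qed.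

Lemma s4 : Num.sqrt (1 + (1 + (1 + (1 + (0 + (0 + 0)))))) = 2 :> R.
Proof. by rewrite (_ : _ + _ = 2 ^+ 2) ?sqrtr_sqr ?ger0_norm //; ring. Qed.

Lemma hatUP (i : 'I_6) (k : 'I_3) :
  normcols (hatU R) i k = Pm r0 i (widen_ord (isT : (3 <= 6)%N) k).
Proof.
rewrite !mxE !big_ord_recl !big_ord0 !mxE /=.
case: i => [[|[|[|[|[|[|i]]]]]] Hi] //;
case: k => [[|[|[|k]]] Hk] //;
  rewrite /bump /= /r0 ?expr0n ?expr1n ?sqrrN ?expr1n /=; try (rewrite ?add0r ?addr0; done).
all: rewrite ?mul0r // s4; ring.
Qed.


Lemma rowsq n (C : 'M[R]_n) i : C *m C^T = 1%:M -> \sum_j C i j ^+ 2 = 1.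
Proof.
move/matrixP => /(_ i i); rewrite !mxE eqxx mulr1n => <-.
by apply: eq_bigr => j _; rewrite !mxE expr2.
Qed.

Lemma colsq n (C : 'M[R]_n) j : C^T *m C = 1%:M -> \sum_i C i j ^+ 2 = 1.
Proof.
move/matrixP => /(_ j j); rewrite !mxE eqxx mulr1n => <-.
by apply: eq_bigr => i _; rewrite !mxE expr2.
Qed.

Lemma count_eig n (C : 'M[R]_n) (mu lam : 'rV[R]_n) c :
  C *m C^T = 1%:M -> C^T *m C = 1%:M ->
  (forall i j, C i j * (mu 0 i - lam 0 j) = 0) ->
  #|[pred i | mu 0 i == c]| = #|[pred j | lam 0 j == c]|.
Proof.
move=> h1 h2 h.
have z1 i j : mu 0 i = c -> lam 0 j != c -> C i j = 0.
  move=> e ne; move: (h i j); rewrite e => /eqP; rewrite mulf_eq0 subr_eq0 (eq_sym c) (negbTE ne) orbF.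
  by move/eqP.
have z2 i j : mu 0 i != c -> lam 0 j = c -> C i j = 0.
  move=> ne e; move: (h i j); rewrite e => /eqP; rewrite mulf_eq0 subr_eq0 (negbTE ne) orbF.
  by move/eqP.
apply/eqP; rewrite -(eqr_nat R); apply/eqP.
rewrite -[LHS]mulr1n -[RHS]mulr1n -!sumr_const.
transitivity (\sum_(i in [pred i | mu 0 i == c]) \sum_(j in [pred j | lam 0 j == c]) C i j ^+ 2).
  apply: eq_bigr => i; rewrite inE => /eqP Hi.
  rewrite -(@rowsq n C i h1) (bigID (fun j => j \in [pred j | lam 0 j == c])) /=.
  rewrite [X in _ + X = _]big1 ?addr0 // => j; rewrite inE => Hj.
  by rewrite (z1 i j) // expr0n.
rewrite exchange_big /=.
apply: eq_bigr => j; rewrite inE => /eqP Hj.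
rewrite -(@colsq n C j h2) [RHS](bigID (fun i => i \in [pred i | mu 0 i == c])) /=.
rewrite [X in _ = _ + X]big1 ?addr0 // => i; rewrite inE => Hi.
by rewrite (z2 i j) // expr0n.
Qed.

Lemma main_R : exists C delta : R, 0 < C /\ 0 < delta /\
  forall t1 tc ts : R,
    0 < t1 -> 0 < tc -> 0 < ts -> t1 + tc + ts = 1 ->
    0 < ts / t1 -> ts / t1 < tc / t1 -> tc / t1 < delta ->
    forall (V : 'M[R]_6) (lam : 'rV[R]_6),
      V^T *m V = 1%:M ->
      normA t1 tc ts *m V = V *m diag_mx lam ->
      (forall i j : 'I_6, (i <= j)%N -> lam 0 j <= lam 0 i) ->
      (forall i : 'I_3,
          `|lam 0 (widen_ord (isT : (3 <= 6)%N) i) - hatlam t1 ts i|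
            <= C * (tc / t1) ^+ 2) /\
      sinF (top3 V) (normcols (hatU R)) <= C * (tc ^+ 2 / (t1 * (tc - ts))).
Proof.
exists 12, (1/10); split; first lra; split; first lra.
move=> t1 tc ts h1 hc hs hsum _ hsc hcd V lam hV hE hsort.
have hsc' : ts < tc by move: hsc; rewrite ltr_pM2r ?invr_gt0.
have hcd' : tc < t1 / 10 by move: hcd; rewrite ltr_pdivrMr //; lra.
set P := Pm r0.
set C := P^T *m V.
have hVV : V *m V^T = 1%:M by apply: mulmx1C.
have hPP : P *m P^T = 1%:M by apply: mulmx1C; apply: PtP.
have hC1 : C *m C^T = 1%:M.
  by rewrite /C trmx_mul trmxK mulmxA -(mulmxA _ V) hVV mulmx1 PtP.
have hC2 : C^T *m C = 1%:M.
  by rewrite /C trmx_mul trmxK mulmxA -(mulmxA _ P) hPP mulmx1 hV.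
set M := normA t1 tc ts.
set mu' := mu t1 tc ts.
have hPM : P^T *m M = diag_mx mu' *m P^T.
  have e := eigP t1 tc ts r0 h1 hsum.
  by rewrite /M -[LHS]mulmx1 -hPP mulmxA -(mulmxA P^T _ P) e mulmxA PtP mul1mx.
have hD : diag_mx mu' *m C = C *m diag_mx lam.
  by rewrite /C mulmxA -hPM -mulmxA hE mulmxA.
have hC i j : C i j * (mu' 0 i - lam 0 j) = 0.
  move/matrixP: hD => /(_ i j); rewrite mul_diag_mx mul_mx_diag !mxE => e.
  by rewrite mulrBr mulrC e subrr.
have ht1 : t1 = 1 - tc - ts by lra.
set m3 := (t1 + tc - ts) ^+ 2.
have m3lt1 : m3 < 1.
  have e : 1 - m3 = 4 * (ts * (1 - ts)) by rewrite /m3 ht1; ring.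
  have : 0 < ts * (1 - ts) by apply: mulr_gt0; lra.
  lra.
have m3pos : 0 < m3 by rewrite /m3 exprn_gt0 //; lra.
have m4lt : (t1 + ts - tc) ^+ 2 < m3.
  have e : m3 - (t1 + ts - tc) ^+ 2 = 4 * ((tc - ts) * t1) by rewrite /m3; ring.
  have : 0 < (tc - ts) * t1 by apply: mulr_gt0; lra.
  lra.
have m5lt : (t1 - ts - tc) ^+ 2 < m3.
  have e : m3 - (t1 - ts - tc) ^+ 2 = 4 * ((t1 - ts) * tc) by rewrite /m3; ring.
  have : 0 < (t1 - ts) * tc by apply: mulr_gt0; lra.
  lra.
have muC (i : 'I_6) : [\/ mu' 0 i = 1 /\ (i < 2)%N,
   mu' 0 i = m3 /\ val i = 2%N | mu' 0 i < m3 /\ (3 <= i)%N].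
  case: i => [[|[|[|[|[|[|i]]]]]] Hi] //; rewrite mxE /=.
  - by constructor 1.
  - by constructor 1.
  - by constructor 2.
  - by constructor 3.
  - by constructor 3.
  - by constructor 3.
have colnz j : exists i, C i j != 0.
  case: (boolP [exists i, C i j != 0]) => [/existsP //|/existsPn H].
  exfalso; have := @colsq 6 C j hC2; rewrite big1 => [/eqP|i _].
    by rewrite eq_sym oner_eq0.
  by move: (H i) => /negPn/eqP ->; rewrite expr0n.
have rownz i : exists j, C i j != 0.
  case: (boolP [exists j, C i j != 0]) => [/existsP //|/existsPn H].
  exfalso; have := @rowsq 6 C i hC1; rewrite big1 => [/eqP|j _].
    by rewrite eq_sym oner_eq0.
  by move: (H j) => /negPn/eqP ->; rewrite expr0n.
have eqC i j : C i j != 0 -> lam 0 j = mu' 0 i.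
  move=> nz; move/eqP: (hC i j); rewrite mulf_eq0 (negbTE nz) /= subr_eq0.
  by move/eqP.
have lamle1 j : lam 0 j <= 1.
  have [i /eqC ->] := colnz j.
  by case: (muC i) => [[-> _]|[-> _]|[h _]]; lra.
have cardmu : #|[pred i | mu' 0 i == 1]| = 2%N.
  rewrite -[RHS](_ : #|[pred j : 'I_6 | (j < 2)%N]| = 2%N); last first.
    by rewrite -sum1_card big_mkcond !big_ord_recl big_ord0.
  apply: eq_card => i; rewrite !inE.
  case: (muC i) => [[-> ->]|[-> /eqP]|[h]]; first by rewrite eqxx.
    by rewrite (lt_eqF m3lt1) => /eqP ->.
  by rewrite (lt_eqF (lt_trans h m3lt1)); case: i h => [[|[|[|i]]] Hi].
have cardlam : #|[pred j | lam 0 j == 1]| = 2%N.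
  by rewrite -(@count_eig 6 C mu' lam 1 hC1 hC2 hC).
have l1 : lam 0 (inord 1) = 1.
  apply/eqP; rewrite eq_le lamle1 /= leNgt; apply/negP => hlt.
  have : leq #|[pred j | lam 0 j == 1]| #|pred1 (inord 0 : 'I_6)|.
    apply: subset_leq_card; apply/subsetP => j; rewrite !inE => /eqP hj.
    apply/eqP/val_inj; rewrite /= inordK //.
    case: j hj => [[|m] Hm] //= hj.
    have := hsort (inord 1) (Ordinal Hm); rewrite inordK // => /(_ isT).
    rewrite hj => h; exfalso; lra.
  by rewrite cardlam card1.
have l0 : lam 0 (inord 0) = 1.
  apply/eqP; rewrite eq_le lamle1 /= -{1}l1; by apply: hsort; rewrite !inordK.
have c3 : #|[pred j : 'I_6 | (j < 3)%N]| = 3%N.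
  by rewrite -sum1_card big_mkcond !big_ord_recl big_ord0.
have l2lt : lam 0 (inord 2) < 1.
  rewrite lt_neqAle lamle1 andbT; apply/negP => /eqP e.
  have : leq #|[pred j : 'I_6 | (j < 3)%N]| #|[pred j | lam 0 j == 1]|.
    apply: subset_leq_card; apply/subsetP => j; rewrite !inE => hj.
    apply/eqP; apply: le_anti; rewrite lamle1 /= -{1}e; apply: hsort.
    by rewrite inordK.
  by rewrite cardlam c3.
have mu2 : mu' 0 (inord 2) = m3 by rewrite mxE inordK.
have l2 : lam 0 (inord 2) = m3.
  apply/eqP; rewrite eq_le; apply/andP; split.
    have [i nz] := colnz (inord 2); have e := eqC _ _ nz; rewrite e.
    by case: (muC i) => [[h _]|[-> _]|[h _]]; [move: l2lt; rewrite e h; lra | lra | lra].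
  have [j /eqC e'] := rownz (inord 2).
  rewrite mu2 in e'.
  case: (leqP 2 j) => hj.
    by rewrite -e'; apply: hsort; rewrite inordK.
  have := hsort j (inord 1); rewrite inordK // => /(_ hj); rewrite l1 e'; lra.
have hx : 0 <= 12 * (tc / t1) ^+ 2 by apply: mulr_ge0; [lra | apply: sqr_ge0].
have t1n : t1 != 0 by rewrite gt_eqF.
split.
  case=> [[|[|[|k]]] Hk] //.
  - have -> : widen_ord (isT : (3 <= 6)%N) (Ordinal Hk) = inord 0.
      by apply: val_inj; rewrite /= inordK.
    by rewrite l0 /hatlam /= subrr normr0.
  - have -> : widen_ord (isT : (3 <= 6)%N) (Ordinal Hk) = inord 1.
      by apply: val_inj; rewrite /= inordK.
    by rewrite l1 /hatlam /= subrr normr0.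
  have -> : widen_ord (isT : (3 <= 6)%N) (Ordinal Hk) = inord 2.
    by apply: val_inj; rewrite /= inordK.
  rewrite l2 /hatlam /=.
  have hts : ts = 1 - t1 - tc by lra.
  have e : m3 - (1 - 4 * (ts / t1)) =
     (4 * ts ^+ 2 * t1 ^+ 2 + 4 * ts * (tc + ts) * t1) / t1 ^+ 2.
    by rewrite /m3 hts; field.
  have np : 0 <= 4 * ts ^+ 2 * t1 ^+ 2 + 4 * ts * (tc + ts) * t1.
    apply: addr_ge0; apply: mulr_ge0; try apply: mulr_ge0; try apply: mulr_ge0;
      try apply: sqr_ge0; lra.
  rewrite e ger0_norm ?divr_ge0 ?sqr_ge0 // expr_div_n [X in _ <= X]mulrA.
  apply: ler_wpM2r; first by rewrite invr_ge0 sqr_ge0.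
  have a1 : ts * t1 <= tc.
    have : 0 <= ts * (1 - t1) by apply: mulr_ge0; lra.
    have : ts * (1 - t1) = ts - ts * t1 by ring.
    lra.
  have p1 : 0 <= ts * t1 by apply: mulr_ge0; lra.
  have a2 : ts ^+ 2 * t1 ^+ 2 <= tc ^+ 2.
    have : 0 <= (tc - ts * t1) * (tc + ts * t1) by apply: mulr_ge0; lra.
    have : (tc - ts * t1) * (tc + ts * t1) = tc ^+ 2 - ts ^+ 2 * t1 ^+ 2 by ring.
    lra.
  have a3 : ts * (tc + ts) * t1 <= 2 * tc ^+ 2.
    have : 0 <= ts * (tc + ts) * (1 - t1).
      by apply: mulr_ge0; [apply: mulr_ge0|]; lra.
    have : 0 <= (tc - ts) * (2 * tc + ts) by apply: mulr_ge0; lra.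
    have : ts * (tc + ts) * (1 - t1) = ts * (tc + ts) - ts * (tc + ts) * t1 by ring.
    have : (tc - ts) * (2 * tc + ts) = 2 * tc ^+ 2 - ts * (tc + ts) by ring.
    lra.
  lra.
have lamge (a : 'I_6) : (a < 3)%N -> m3 <= lam 0 a.
  by move=> ha; rewrite -l2; apply: hsort; rewrite inordK.
have z (i j : 'I_6) : (3 <= i)%N -> (j < 3)%N -> C i j = 0.
  move=> hi hj; case: (eqVneq (C i j) 0) => // nz; exfalso.
  have e := eqC _ _ nz; have := lamge _ hj; rewrite e.
  case: (muC i) => [[_ h]|[_ h]|[h _]].
  - by move: hi h; case: i nz e => [[|[|[|i]]] Hi].
  - by move: hi h; case: i nz e => [[|[|[|i]]] Hi].
  - lra.
have eT (i j : 'I_3) : ((top3 V)^T *m normcols (hatU R)) i j = C (inord j) (inord i).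
  rewrite [LHS]mxE [RHS]mxE; apply: eq_bigr => l _.
  have wi (k : 'I_3) : widen_ord (isT : (3 <= 6)%N) k = inord k.
    by apply: val_inj; rewrite /= inordK // (leq_trans (ltn_ord _)).
  by rewrite hatUP !mxE !wi mulrC.
have cs (a : nat) : (a < 3)%N -> \sum_(k < 6) C (inord k) (inord a) ^+ 2 = 1.
  move=> ha; rewrite -(@colsq 6 C (inord a) hC2); apply: eq_bigr => k _.
  by rewrite inord_val.
have key : \sum_(i < 3) \sum_(j < 3) ((top3 V)^T *m normcols (hatU R)) i j ^+ 2 = 3.
  under eq_bigr => i _ do under eq_bigr => j _ do rewrite eT.
  have c0 := cs 0%N isT; have c1 := cs 1%N isT; have c2 := cs 2%N isT.
  move: c0 c1 c2; rewrite !big_ord_recl !big_ord0 /= /bump /=.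
  have zz (k a : nat) : (3 <= k < 6)%N -> (a < 3)%N -> C (inord k) (inord a) = 0.
    by move=> /andP [h3 h6] ha; apply: z; rewrite inordK // (leq_trans ha).
  rewrite !(zz 3%N 0%N) // !(zz 4%N 0%N) // !(zz 5%N 0%N) //.
  rewrite !(zz 3%N 1%N) // !(zz 4%N 1%N) // !(zz 5%N 1%N) //.
  rewrite !(zz 3%N 2%N) // !(zz 4%N 2%N) // !(zz 5%N 2%N) //.
  rewrite expr0n /=.
  lra.
rewrite /sinF key subrr sqrtr0.
apply: mulr_ge0; first lra.
apply: divr_ge0; first exact: sqr_ge0.
apply: mulr_ge0; lra.
Qed.
End S.

Theorem theorem7 (R : rcfType) :
  exists C delta : R, 0 < C /\ 0 < delta /\
  forall t1 tc ts : R,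
    0 < t1 -> 0 < tc -> 0 < ts -> t1 + tc + ts = 1 ->
    0 < ts / t1 -> ts / t1 < tc / t1 -> tc / t1 < delta ->
    forall (V : 'M[R]_6) (lam : 'rV[R]_6),
      V^T *m V = 1%:M ->
      normA t1 tc ts *m V = V *m diag_mx lam ->
      (forall i j : 'I_6, (i <= j)%N -> lam 0 j <= lam 0 i) ->
      (forall i : 'I_3,
          `|lam 0 (widen_ord (isT : (3 <= 6)%N) i) - hatlam t1 ts i|
            <= C * (tc / t1) ^+ 2) /\
      sinF (top3 V) (normcols (hatU R)) <= C * (tc ^+ 2 / (t1 * (tc - ts))).
Proof. exact: main_R. Qed.
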